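(* Let $q\in(0,1)$, $\beta<1$ real, and $t,z\in\mathbb{C}$ with $|t|<|z|<1$. Let $\tau$ satisfy $\alpha(\tau+\tau^{-1})=\beta(z+z^{-1})$. (1) If $\alpha$ is real with $|\alpha|<q$, then \[ \sum_{n=0}^{\infty}\frac{(\beta;q)_n}{(\alpha;q)_n}p_n^{(\alpha,\beta)}(z+z^{-1};q)\,t^n=\frac{1-q^{-1}\alpha}{(1-zt)(1-z^{-1}t)}\,{}_3\phi_2\!\left(q,q\tau t,q\tau^{-1}t;qzt,qz^{-1}t;q,q^{-1}\alpha\right). \] (2) If $\alpha=q$, then \[ \sum_{n=0}^{\infty}\frac{(\beta;q)_n}{(q;q)_n}p_n^{(q,\beta)}(z+z^{-1};q)\,t^n=\frac{(q\tau t,q\tau^{-1}t;q)_\infty}{(zt,z^{-1}t;q)_\infty}. \]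
   Context: $(a;q)_n:=\prod_{j=0}^{n-1}(1-aq^j)$, $n\in\mathbb{N}_0\cup\{\infty\}$, $(a_1,\dots,a_r;q)_n:=\prod_i(a_i;q)_n$. The monic polynomials $p_n^{(\alpha,\beta)}(x;q)$ satisfy $p_{-1}=0$, $p_0=1$, $p_{n+1}(x)=xp_n(x)-\tilde\gamma_{n-1}\tilde\gamma_np_{n-1}(x)$ with $\tilde\gamma_n=(1-\alpha q^n)/(1-\beta q^n)$. ${}_3\phi_2(a_1,a_2,a_3;b_1,b_2;q,w)=\sum_{k\ge0}\frac{(a_1,a_2,a_3;q)_k}{(b_1,b_2,q;q)_k}w^k$. The dependence on $\tau$ is only through $\alpha(\tau+\tau^{-1})=\beta(z+z^{-1})$: e.g. $(q^{-1}\alpha)^k(q\tau t,q\tau^{-1}t;q)_k=\prod_{j=0}^{k-1}\bigl(q^{-1}\alpha(1+q^{2j+2}t^2)-q^jt\beta(z+z^{-1})\bigr)$, which also defines it for $\alpha=0$. *)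

(* Defs.v *)
From Stdlib Require Import Reals.
From Coquelicot Require Import Coquelicot.
Open Scope R_scope.

Fixpoint qpochR (a q : R) (n : nat) : R :=
  match n with
  | O => 1
  | S m => qpochR a q m * (1 - a * q ^ m)
  end.

Fixpoint qpochC (a : C) (q : R) (n : nat) : C :=
  match n with
  | O => RtoC 1
  | S m => Cmult (qpochC a q m) (Cminus (RtoC 1) (Cmult a (RtoC (q ^ m))))
  end.

Definition qpoch_inf_is (a : C) (q : R) (L : C) : Prop :=
  filterlim (fun n => qpochC a q n) eventually (locally L).

Definition tgamma (alpha beta q : R) (n : nat) : R :=
  (1 - alpha * q ^ n) / (1 - beta * q ^ n).

(* ppair n = (p_n(x), p_{n+1}(x)) for the monic polynomials
   p_{-1}=0, p_0=1, p_{n+1} = x p_n - tg_{n-1} tg_n p_{n-1}. *)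
Fixpoint ppair (alpha beta q : R) (x : C) (n : nat) : C * C :=
  match n with
  | O => (RtoC 1, x)
  | S m => let (a, b) := ppair alpha beta q x m in
           (b, Cminus (Cmult x b)
                      (Cmult (RtoC (tgamma alpha beta q m * tgamma alpha beta q (S m))) a))
  end.

Definition pnq (alpha beta q : R) (n : nat) (x : C) : C := fst (ppair alpha beta q x n).

(* The tau-free expression for (q^{-1} alpha)^k (q tau t, q tau^{-1} t; q)_k,
   given alpha (tau + tau^{-1}) = beta (z + z^{-1}):
   prod_{j<k} ( q^{-1} alpha (1 + q^{2j+2} t^2) - q^j t beta (z + z^{-1}) ). *)
Fixpoint tau_poch (alpha beta q : R) (z t : C) (k : nat) : C :=
  match k with
  | O => RtoC 1
  | S j => Cmult (tau_poch alpha beta q z t j)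
             (Cminus (Cmult (RtoC (alpha / q))
                            (Cplus (RtoC 1) (Cmult (RtoC (q ^ (2 * j + 2))) (Cmult t t))))
                     (Cmult (RtoC (q ^ j * beta)) (Cmult t (Cplus z (Cinv z)))))
  end.

(* k-th term of 3phi2(q, q tau t, q tau^{-1} t; q z t, q z^{-1} t; q, q^{-1} alpha):
   (q;q)_k (q tau t, q tau^{-1} t;q)_k (q^{-1}alpha)^k / ((q z t, q z^{-1} t, q; q)_k),
   the factor (q;q)_k cancelling. *)
Definition phi32_term (alpha beta q : R) (z t : C) (k : nat) : C :=
  Cdiv (tau_poch alpha beta q z t k)
       (Cmult (qpochC (Cmult (RtoC q) (Cmult z t)) q k)
              (qpochC (Cmult (RtoC q) (Cmult (Cinv z) t)) q k)).

Definition gen_term (alpha beta q : R) (z t : C) (n : nat) : C :=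
  Cmult (RtoC (qpochR beta q n / qpochR alpha q n))
        (Cmult (pnq alpha beta q n (Cplus z (Cinv z))) (Cpow t n)).

(* Main.v *)
Require Import Defs.
From Stdlib Require Import Reals Lra Lia ClassicalEpsilon.
From Coquelicot Require Import Coquelicot.
Open Scope R_scope.

Definition Clim (u : nat -> C) (l : C) := is_lim_seq (fun n => Cmod (u n - l)%C) 0.

Lemma Clim_filterlim u l : Clim u l -> filterlim u eventually (locally l).
Proof.
  intros H. apply filterlim_locally. intros eps.
  apply is_lim_seq_spec in H.
  destruct (H eps) as [N HN]. exists N. intros n Hn. apply (@norm_compat1 C_AbsRing C_NormedModule).
  specialize (HN n Hn). rewrite Rminus_0_r, Rabs_pos_eq in HN by apply Cmod_ge_0.
  change (Cmod (u n - l)%C < eps). exact HN.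
Qed.

Lemma filterlim_Clim u l : filterlim u eventually (locally l) -> Clim u l.
Proof.
  intros H. apply is_lim_seq_spec. intros eps.
  assert (Hnf := norm_factor_gt_0 (K:=C_AbsRing) (V:=C_NormedModule)).
  assert (He : 0 < eps / norm_factor (K:=C_AbsRing) (V:=C_NormedModule)).
  { apply Rdiv_lt_0_compat; [apply cond_pos | exact Hnf]. }
  apply filterlim_locally with (eps := mkposreal _ He) in H.
  destruct H as [N HN]. exists N. intros n Hn. specialize (HN n Hn).
  apply (@norm_compat2 C_AbsRing C_NormedModule) in HN. simpl in HN.
  rewrite Rminus_0_r, Rabs_pos_eq by apply Cmod_ge_0.
  change (Cmod (u n - l)%C < pos eps).
  change (Cmod (u n - l)%C < norm_factor (K:=C_AbsRing) (V:=C_NormedModule) * (eps / norm_factor (K:=C_AbsRing) (V:=C_NormedModule))) in HN.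
  replace (pos eps) with (norm_factor (K:=C_AbsRing) (V:=C_NormedModule) * (eps / norm_factor (K:=C_AbsRing) (V:=C_NormedModule))).
  exact HN. field. apply Rgt_not_eq, Hnf.
Qed.

Lemma Clim_unique u a b : Clim u a -> Clim u b -> a = b.
Proof.
  intros Ha Hb. apply Clim_filterlim in Ha. apply Clim_filterlim in Hb.
  exact (filterlim_locally_unique (K:=C_AbsRing) (V:=C_NormedModule) u a b Ha Hb).
Qed.

Lemma Clim_bound u l (v : nat -> R) :
  (forall n, Cmod (u n - l)%C <= v n) -> is_lim_seq v 0 -> Clim u l.
Proof.
  intros H Hv. unfold Clim.
  apply is_lim_seq_le_le with (u := fun _ => 0) (w := v).
  - intros n. split; [apply Cmod_ge_0 | apply H].
  - apply is_lim_seq_const.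
  - exact Hv.
Qed.

Lemma Cmod_rev_tri a b : Rabs (Cmod a - Cmod b) <= Cmod (a - b)%C.
Proof.
  assert (H1 : Cmod a <= Cmod (a - b)%C + Cmod b).
  { replace a with ((a - b) + b)%C at 1 by ring. apply Cmod_triangle. }
  assert (H2 : Cmod b <= Cmod (a - b)%C + Cmod a).
  { replace b with (-(a - b) + a)%C at 1 by ring. rewrite <- (Cmod_opp (a - b)%C). apply Cmod_triangle. }
  apply Rabs_le. lra.
Qed.

Lemma Clim_Cmod u l : Clim u l -> is_lim_seq (fun n => Cmod (u n)) (Cmod l).
Proof.
  intros H. unfold Clim in H.
  apply is_lim_seq_le_le with (u := fun n => Cmod l - Cmod (u n - l)%C)
                              (w := fun n => Cmod l + Cmod (u n - l)%C).
  - intros n. pose proof (Cmod_rev_tri (u n) l) as X. apply Rabs_le_between in X. lra.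
  - replace (Finite (Cmod l)) with (Rbar_minus (Cmod l) 0) by (simpl; f_equal; ring).
    apply is_lim_seq_minus'. apply is_lim_seq_const. exact H.
  - replace (Finite (Cmod l)) with (Rbar_plus (Cmod l) 0) by (simpl; f_equal; ring).
    apply is_lim_seq_plus'. apply is_lim_seq_const. exact H.
Qed.

Lemma Clim_mult u v a b : Clim u a -> Clim v b -> Clim (fun n => u n * v n)%C (a * b)%C.
Proof.
  intros Hu Hv. unfold Clim in *.
  apply Clim_bound with (v := fun n => Cmod (u n - a)%C * Cmod (v n - b)%C
       + Cmod a * Cmod (v n - b)%C + Cmod b * Cmod (u n - a)%C).
  - intros n.
    replace (u n * v n - a * b)%C with ((u n - a) * (v n - b) + a * (v n - b) + b * (u n - a))%C by ring.
    eapply Rle_trans. apply Cmod_triangle.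
    rewrite !Cmod_mult.
    apply Rplus_le_compat_r. eapply Rle_trans. apply Cmod_triangle. rewrite !Cmod_mult. lra.
  - replace (Finite 0) with (Finite (0 * 0 + Cmod a * 0 + Cmod b * 0)) by (f_equal; ring).
    apply is_lim_seq_plus'. apply is_lim_seq_plus'.
    apply is_lim_seq_mult'; assumption.
    apply is_lim_seq_scal_l with (a := Cmod a) in Hv. exact Hv.
    apply is_lim_seq_scal_l with (a := Cmod b) in Hu. exact Hu.
Qed.

Lemma Clim_const (c : C) : Clim (fun _ => c) c.
Proof.
  apply Clim_bound with (v := fun _ => 0).
  intros n. replace (c - c)%C with (RtoC 0) by ring. rewrite Cmod_0. lra.
  apply is_lim_seq_const.
Qed.

Lemma Clim_S u l : Clim (fun n => u (S n)) l -> Clim u l.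
Proof. intros H. unfold Clim in *. apply is_lim_seq_incr_1. exact H. Qed.

Lemma Clim_series a l : is_series a l <-> Clim (sum_n a) l.
Proof. split; [apply filterlim_Clim | apply Clim_filterlim]. Qed.

Lemma Cpow_scal (a : R) (s : C) n : Cpow (RtoC a * s)%C n = (RtoC (a ^ n) * Cpow s n)%C.
Proof.
  induction n; simpl. ring. rewrite IHn, RtoC_mult. ring.
Qed.

Lemma Cmod_Cpow (s : C) n : Cmod (Cpow s n) = Cmod s ^ n.
Proof.
  induction n; simpl. apply Cmod_1. rewrite Cmod_mult, IHn. ring.
Qed.

Lemma qpochC_shift a q k :
  qpochC a q (S k) = ((1 - a) * qpochC (RtoC q * a) q k)%C.
Proof.
  induction k.
  - simpl. ring.
  - change (qpochC a q (S (S k))) with (qpochC a q (S k) * (1 - a * RtoC (q ^ (S k))))%C.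
    rewrite IHk. simpl. rewrite RtoC_mult. ring.
Qed.

Lemma qpochC_add a q m n :
  qpochC a q (m + n) = (qpochC a q m * qpochC (a * RtoC (q ^ m)) q n)%C.
Proof.
  induction n.
  - rewrite Nat.add_0_r. simpl. ring.
  - rewrite Nat.add_succ_r. simpl. rewrite IHn, pow_add, RtoC_mult. ring.
Qed.

Lemma qpochR_nz a q n : (forall k, 1 - a * q ^ k <> 0) -> qpochR a q n <> 0.
Proof.
  intros H. induction n; simpl. lra. apply Rmult_integral_contrapositive_currified; auto.
Qed.

Definition xz (z : C) : C := (z + / z)%C.
Definition cc (al be q : R) n := qpochR be q n / qpochR al q n.
Definition rr (al be q : R) (z : C) n : C := (RtoC (cc al be q n) * pnq al be q n (xz z))%C.

Lemma pnq_SS al be q x n :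
  pnq al be q (S (S n)) x =
  (x * pnq al be q (S n) x - RtoC (tgamma al be q n * tgamma al be q (S n)) * pnq al be q n x)%C.
Proof.
  unfold pnq. simpl. destruct (ppair al be q x n) as [a b]. simpl. reflexivity.
Qed.

Lemma rr_0 al be q z : rr al be q z 0 = RtoC 1.
Proof. unfold rr, cc, pnq. simpl. rewrite Rdiv_1_l, Rinv_1. ring. Qed.

Lemma rr_1 al be q z : (1 - al) <> 0 ->
  rr al be q z 1 = (RtoC ((1 - be) / (1 - al)) * xz z)%C.
Proof.
  intros H. unfold rr, cc, pnq. simpl. f_equal. f_equal. field. lra.
Qed.

Lemma rr_rec al be q z n :
  (forall k, 1 - al * q ^ k <> 0) -> (forall k, 1 - be * q ^ k <> 0) ->
  rr al be q z (S (S n)) =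
  (RtoC ((1 - be * q ^ (S n)) / (1 - al * q ^ (S n))) * xz z * rr al be q z (S n) - rr al be q z n)%C.
Proof.
  intros Ha Hb.
  assert (E1 : cc al be q (S (S n)) = (1 - be * q ^ (S n)) / (1 - al * q ^ (S n)) * cc al be q (S n)).
  { unfold cc. simpl. pose proof (qpochR_nz al q n Ha). pose proof (Ha n). pose proof (Ha (S n)).
    simpl in *. field. auto. }
  assert (E2 : cc al be q (S (S n)) * (tgamma al be q n * tgamma al be q (S n)) = cc al be q n).
  { unfold cc, tgamma. simpl. pose proof (qpochR_nz al q n Ha). pose proof (Ha n). pose proof (Ha (S n)).
    pose proof (qpochR_nz be q n Hb). pose proof (Hb n). pose proof (Hb (S n)).
    simpl in *. field. auto. }
  unfold rr. rewrite pnq_SS.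
  rewrite <- E2, E1, !RtoC_mult. ring.
Qed.

Lemma pow_q_bounds q k : 0 < q < 1 -> 0 < q ^ k <= 1.
Proof.
  intros Hq. induction k; simpl. lra. split. apply Rmult_lt_0_compat; lra.
  rewrite <- (Rmult_1_r 1). apply Rmult_le_compat; lra.
Qed.

Lemma pow_q_le q m n : 0 < q < 1 -> (m <= n)%nat -> q ^ n <= q ^ m.
Proof.
  intros Hq Hmn. replace n with (m + (n - m))%nat by lia. rewrite pow_add.
  pose proof (pow_q_bounds q m Hq). pose proof (pow_q_bounds q (n - m) Hq).
  rewrite <- (Rmult_1_r (q ^ m)) at 2. apply Rmult_le_compat_l; lra.
Qed.

Lemma sum_f_R0_ge (f : nat -> R) k n : (forall i, 0 <= f i) -> (k <= n)%nat -> f k <= sum_f_R0 f n.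
Proof.
  intros Hf Hk. induction n.
  - inversion Hk. simpl. lra.
  - destruct (Nat.eq_dec k (S n)) as [->|Hne].
    + simpl. pose proof (cond_pos_sum f n Hf). lra.
    + simpl. assert (k <= n)%nat by lia. specialize (IHn H). pose proof (Hf (S n)). lra.
Qed.

Lemma one_minus_bound al q k : 0 < q < 1 -> Rabs al < 1 -> 1 - Rabs al <= 1 - al * q ^ k.
Proof.
  intros Hq Ha. pose proof (pow_q_bounds q k Hq).
  assert (al * q ^ k <= Rabs al).
  { destruct (Rle_dec 0 al).
    - rewrite Rabs_pos_eq by lra. rewrite <- (Rmult_1_r al) at 2. apply Rmult_le_compat_l; lra.
    - assert (al * q ^ k <= 0). { apply Rmult_le_0_r; lra. } pose proof (Rabs_pos al). lra. }
  lra.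
Qed.

Lemma delta_bound al be q k : 0 < q < 1 -> Rabs al < 1 ->
  Rabs ((1 - be * q ^ k) / (1 - al * q ^ k) - 1) <= Rabs (al - be) / (1 - Rabs al) * q ^ k.
Proof.
  intros Hq Ha. pose proof (one_minus_bound al q k Hq Ha) as HB.
  pose proof (pow_q_bounds q k Hq).
  replace ((1 - be * q ^ k) / (1 - al * q ^ k) - 1) with ((al - be) * q ^ k / (1 - al * q ^ k))
    by (field; lra).
  unfold Rdiv. rewrite !Rabs_mult, Rabs_inv, (Rabs_pos_eq (q ^ k)) by lra.
  rewrite (Rabs_pos_eq (1 - al * q ^ k)) by lra.
  replace (Rabs (al - be) * / (1 - Rabs al) * q ^ k) with (Rabs (al - be) * q ^ k * / (1 - Rabs al)) by ring.
  apply Rmult_le_compat_l. apply Rmult_le_pos; [apply Rabs_pos|lra].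
  apply Rinv_le_contravar; lra.
Qed.

Lemma Rdiv_le_0_compat a b : 0 <= a -> 0 < b -> 0 <= a / b.
Proof. intros. unfold Rdiv. apply Rmult_le_pos. lra. apply Rlt_le, Rinv_0_lt_compat. lra. Qed.

Lemma growth al be q z t :
  0 < q < 1 -> Rabs al < 1 -> (forall k, 1 - be * q ^ k <> 0) ->
  z <> RtoC 0 -> Cmod t < Cmod z -> Cmod z < 1 ->
  exists Cst rho, 0 < rho /\ rho * Cmod t < 1 /\ 0 <= Cst /\
    forall n, Cmod (rr al be q z n) <= Cst * rho ^ n.
Proof.
  intros Hq Hal Hb Hz Htz Hz1.
  assert (Ha : forall k, 1 - al * q ^ k <> 0).
  { intros k. pose proof (one_minus_bound al q k Hq Hal). pose proof (Rabs_pos al). lra. }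
  set (x := xz z).
  set (r := rr al be q z).
  set (e := fun n => (r (S n) - z * r n)%C).
  set (K := Cmod x * (Rabs (al - be) / (1 - Rabs al))).
  assert (HK : 0 <= K).
  { unfold K, Rdiv. apply Rmult_le_pos. apply Cmod_ge_0. apply Rmult_le_pos. apply Rabs_pos.
    apply Rlt_le, Rinv_0_lt_compat; lra. }
  set (zm := Cmod z). set (tm := Cmod t).
  assert (Hzm : 0 < zm) by (apply Cmod_gt_0; exact Hz).
  assert (Htm : 0 <= tm) by apply Cmod_ge_0.
  assert (Htz' : tm < zm) by (unfold tm, zm; exact Htz).
  assert (Hz1' : zm < 1) by (unfold zm; exact Hz1).
  assert (Hw : Cmod (/ z)%C = / zm) by (apply Cmod_inv; exact Hz).
  set (rho := 2 / (zm + tm)).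
  assert (Hrho0 : 0 < rho) by (unfold rho; apply Rdiv_lt_0_compat; lra).
  assert (Hrs : rho * zm + rho * tm = 2) by (unfold rho; field; lra).
  assert (Hrt : rho * tm < 1).
  { assert (rho * tm < rho * zm) by (apply Rmult_lt_compat_l; lra). lra. }
  assert (Hrz : 1 < rho * zm).
  { assert (rho * tm < rho * zm) by (apply Rmult_lt_compat_l; lra). lra. }
  assert (Hizm : / zm * zm = 1) by (field; lra).
  assert (Hwr : / zm < rho).
  { assert (0 < / zm) by (apply Rinv_0_lt_compat; lra).
    assert (/ zm * 1 < / zm * (rho * zm)) by (apply Rmult_lt_compat_l; lra). nra. }
  assert (Hzr : zm < rho).
  { assert (zm * zm < 1 * 1). { apply Rmult_le_0_lt_compat; lra. } nra. }
  set (L := rho / (rho - zm)).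
  assert (HL0 : 0 < L) by (unfold L; apply Rdiv_lt_0_compat; lra).
  assert (HL : L * (rho - zm) = rho) by (unfold L; field; lra).
  assert (Hrec : forall k, e (S k) = ((/ z) * e k +
      (x * RtoC ((1 - be * q ^ (S k)) / (1 - al * q ^ (S k)) - 1)) * r (S k))%C).
  { intros k. unfold e, r. rewrite rr_rec by assumption. fold r.
    rewrite RtoC_minus. unfold x, xz. field. exact Hz. }
  assert (Hebound : forall k, Cmod (e (S k)) <= / zm * Cmod (e k) + K * q ^ (S k) * Cmod (r (S k))).
  { intros k. rewrite Hrec. eapply Rle_trans. apply Cmod_triangle.
    rewrite !Cmod_mult, Hw, Cmod_R.
    apply Rplus_le_compat_l. apply Rmult_le_compat_r. apply Cmod_ge_0.
    unfold K. rewrite Rmult_assoc. apply Rmult_le_compat_l. apply Cmod_ge_0.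
    apply delta_bound; assumption. }
  assert (Hrr : forall k, r (S (S k)) = (e (S k) + z * r (S k))%C).
  { intros k. unfold e. ring. }
  set (y := (rho - / zm) / (K * L + 1)).
  assert (Hy : 0 < y).
  { unfold y. apply Rdiv_lt_0_compat. lra. assert (0 <= K * L) by (apply Rmult_le_pos; lra). lra. }
  assert (Hq1 : Rabs q < 1) by (rewrite Rabs_pos_eq; lra).
  destruct (pow_lt_1_zero q Hq1 y Hy) as [N0 HN0].
  assert (HN : forall n, (n >= N0)%nat -> K * L * q ^ n <= rho - / zm).
  { intros n Hn. specialize (HN0 n Hn). pose proof (pow_q_bounds q n Hq).
    rewrite Rabs_pos_eq in HN0 by lra.
    assert (K * L * q ^ n <= K * L * y).
    { apply Rmult_le_compat_l. apply Rmult_le_pos; lra. lra. }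
    assert (K * L * y <= rho - / zm).
    { unfold y. assert (0 <= K * L) by (apply Rmult_le_pos; lra).
      apply (Rmult_le_reg_r (K * L + 1)). lra.
      replace (K * L * ((rho - / zm) / (K * L + 1)) * (K * L + 1)) with (K * L * (rho - / zm)) by (field; lra).
      nra. }
    lra. }
  set (E := Cmod (e N0) / rho ^ (S N0) + Cmod (r (S N0)) / (L * rho ^ (S N0))).
  assert (HP : forall m, 0 < rho ^ m) by (intros m; apply pow_lt; lra).
  assert (HE : 0 <= E).
  { unfold E. pose proof (HP (S N0)). apply Rplus_le_le_0_compat; apply Rdiv_le_0_compat.
    apply Cmod_ge_0. lra. apply Cmod_ge_0. apply Rmult_lt_0_compat; lra. }
  assert (Inv : forall k, Cmod (e (N0 + k)%nat) <= E * rho ^ (S (N0 + k)) /\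
                         Cmod (r (S (N0 + k))) <= E * L * rho ^ (S (N0 + k))).
  { induction k.
    - rewrite Nat.add_0_r. pose proof (HP (S N0)). pose proof (Cmod_ge_0 (e N0)). pose proof (Cmod_ge_0 (r (S N0))).
      split.
      + unfold E. rewrite Rmult_plus_distr_r.
        replace (Cmod (e N0) / rho ^ S N0 * rho ^ S N0) with (Cmod (e N0)) by (field; lra).
        assert (0 <= Cmod (r (S N0)) / (L * rho ^ S N0) * rho ^ S N0).
        { apply Rmult_le_pos; [apply Rdiv_le_0_compat|]; try apply Rmult_lt_0_compat; lra. }
        lra.
      + unfold E. rewrite !Rmult_plus_distr_r.
        replace (Cmod (r (S N0)) / (L * rho ^ S N0) * L * rho ^ S N0) with (Cmod (r (S N0))) by (field; lra).
        assert (0 <= Cmod (e N0) / rho ^ S N0 * L * rho ^ S N0).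
        { apply Rmult_le_pos; [apply Rmult_le_pos; [apply Rdiv_le_0_compat|]|]; lra. }
        lra.
    - destruct IHk as [IA IB]. rewrite Nat.add_succ_r.
      set (m := (N0 + k)%nat) in *.
      set (P := rho ^ (S m)).
      assert (HPm : 0 < P) by apply HP.
      assert (Hqm := HN (S m) ltac:(lia)).
      pose proof (pow_q_bounds q (S m) Hq).
      assert (HeS : Cmod (e (S m)) <= E * rho ^ (S (S m))).
      { eapply Rle_trans. apply Hebound.
        assert (h1 : / zm * Cmod (e m) <= / zm * (E * P)).
        { apply Rmult_le_compat_l. apply Rlt_le, Rinv_0_lt_compat; lra. exact IA. }
        assert (h2 : K * q ^ S m * Cmod (r (S m)) <= K * q ^ S m * (E * L * P)).
        { apply Rmult_le_compat_l. apply Rmult_le_pos; lra. exact IB. }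
        assert (h3 : E * P * (/ zm + K * L * q ^ S m) <= E * P * rho).
        { apply Rmult_le_compat_l. apply Rmult_le_pos; lra. lra. }
        replace (rho ^ S (S m)) with (P * rho) by (unfold P; simpl; ring).
        lra. }
      split. exact HeS.
      rewrite Hrr. eapply Rle_trans. apply Cmod_triangle. rewrite Cmod_mult. fold zm.
      assert (h4 : zm * Cmod (r (S m)) <= zm * (E * L * P)).
      { apply Rmult_le_compat_l. lra. exact IB. }
      replace (rho ^ S (S m)) with (P * rho) in * by (unfold P; simpl; ring).
      assert (E * P * rho + zm * (E * L * P) = E * L * (P * rho)).
      { replace rho with (L * (rho - zm)) at 1 by exact HL. ring. }
      lra. }
  set (Sm := sum_f_R0 (fun k => Cmod (r k) / rho ^ k) N0).
  assert (HSm : 0 <= Sm).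
  { apply cond_pos_sum. intros i. apply Rdiv_le_0_compat. apply Cmod_ge_0. apply HP. }
  exists (E * L + Sm), rho. split; [lra|]. split; [exact Hrt|]. split.
  { assert (0 <= E * L) by (apply Rmult_le_pos; lra). lra. }
  intros n. fold r.
  destruct (Compare_dec.le_lt_dec n N0) as [Hn|Hn].
  - assert (h : Cmod (r n) / rho ^ n <= Sm).
    { apply (sum_f_R0_ge (fun k => Cmod (r k) / rho ^ k)). intros i. apply Rdiv_le_0_compat. apply Cmod_ge_0. apply HP. exact Hn. }
    pose proof (HP n).
    assert (Cmod (r n) <= Sm * rho ^ n).
    { replace (Cmod (r n)) with (Cmod (r n) / rho ^ n * rho ^ n) by (field; lra).
      apply Rmult_le_compat_r; lra. }
    assert (0 <= E * L * rho ^ n) by (apply Rmult_le_pos; [apply Rmult_le_pos|]; lra).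
    lra.
  - destruct n as [|n]. lia.
    replace n with (N0 + (n - N0))%nat by lia.
    destruct (Inv (n - N0)%nat) as [_ IB].
    pose proof (HP (S (N0 + (n - N0)))).
    assert (0 <= Sm * rho ^ S (N0 + (n - N0))) by (apply Rmult_le_pos; lra).
    lra.
Qed.

Lemma sum_n_Cmod (a : nat -> C) (b : nat -> R) :
  (forall n, Cmod (a n) <= b n) -> forall N, Cmod (sum_n a N) <= sum_n b N.
Proof.
  intros H N. induction N.
  - rewrite !sum_O. apply H.
  - rewrite !sum_Sn. change (Cmod (Cplus (sum_n a N) (a (S N))) <= sum_n b N + b (S N)).
    eapply Rle_trans. apply Cmod_triangle. specialize (H (S N)). lra.
Qed.

Lemma series_norm_le (a : nat -> C) l (b : nat -> R) lb :
  is_series a l -> (forall n, Cmod (a n) <= b n) -> is_series b lb -> Cmod l <= lb.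
Proof.
  intros Ha Hab Hb. apply Clim_series in Ha. apply Clim_Cmod in Ha.
  assert (Hb' : is_lim_seq (sum_n b) lb) by exact Hb.
  pose proof (is_lim_seq_le _ _ _ _ (sum_n_Cmod a b Hab) Ha Hb'). simpl in H. exact H.
Qed.

Definition aa al be q z (s : C) n := (rr al be q z n * Cpow s n)%C.

Lemma Fseries al be q z t Cst rho (s : C) :
  0 < rho -> rho * Cmod t < 1 -> 0 <= Cst ->
  (forall n, Cmod (rr al be q z n) <= Cst * rho ^ n) ->
  Cmod s <= Cmod t ->
  exists Fs, is_series (aa al be q z s) Fs /\
     Cmod (Fs - 1)%C <= Cmod s * (Cst * rho / (1 - rho * Cmod t)).
Proof.
  intros Hr Hrt HC Hg Hs.
  set (r := rr al be q z).
  set (b := fun k => Cst * rho * (rho * Cmod t) ^ k).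
  assert (Hbs : is_series b (Cst * rho * / (1 - rho * Cmod t))).
  { apply (is_series_scal_l (K:=R_AbsRing) (V:=R_NormedModule) (Cst * rho)).
    apply is_series_geom. rewrite Rabs_pos_eq. exact Hrt. apply Rmult_le_pos. lra. apply Cmod_ge_0. }
  set (a' := fun k => (r (S k) * Cpow s k)%C).
  assert (Hab : forall k, Cmod (a' k) <= b k).
  { intros k. unfold a', b. rewrite Cmod_mult, Cmod_Cpow.
    pose proof (Hg (S k)). fold r in H.
    assert (Cmod s ^ k <= Cmod t ^ k) by (apply pow_incr; split; [apply Cmod_ge_0 | exact Hs]).
    rewrite Rpow_mult_distr.
    replace (Cst * rho * (rho ^ k * Cmod t ^ k)) with ((Cst * rho ^ (S k)) * Cmod t ^ k) by (simpl; ring).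
    apply Rmult_le_compat. apply Cmod_ge_0. apply pow_le, Cmod_ge_0. exact H. exact H0. }
  assert (Hex : ex_series a').
  { apply (ex_series_le (K:=C_AbsRing) (V:=C_CompleteNormedModule) a' b).
    intros n. change (Cmod (a' n) <= b n). apply Hab. exists (Cst * rho * / (1 - rho * Cmod t)). exact Hbs. }
  destruct Hex as [G HG].
  assert (HGb : Cmod G <= Cst * rho * / (1 - rho * Cmod t)) by (eapply series_norm_le; eauto).
  exists (1 + s * G)%C. split.
  - apply (is_series_decr_1 (K:=C_AbsRing) (V:=C_NormedModule)).
    apply (is_series_ext (K:=C_AbsRing) (V:=C_NormedModule) (fun k => scal s (a' k))).
    { intros n. unfold a', aa. fold r. change (scal s (r (S n) * Cpow s n)%C) with (s * (r (S n) * Cpow s n))%C.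
      simpl. ring. }
    match goal with |- is_series _ ?l => replace l with (scal s G) end.
    exact (is_series_scal (K:=C_AbsRing) (V:=C_NormedModule) s a' G HG).
    unfold aa. rewrite rr_0. change (s * G = 1 + s * G + - (RtoC 1 * Cpow s 0))%C. simpl. ring.
  - replace (1 + s * G - 1)%C with (s * G)%C by ring. rewrite Cmod_mult.
    apply Rmult_le_compat_l. apply Cmod_ge_0. exact HGb.
Qed.

Lemma Cpow_S (s : C) n : Cpow s (S n) = (s * Cpow s n)%C.
Proof. reflexivity. Qed.

Lemma Cseries_lin (u v : nat -> C) lu lv (c d : C) :
  is_series u lu -> is_series v lv ->
  is_series (fun n => c * u n + d * v n)%C (c * lu + d * lv)%C.
Proof.
  intros Hu Hv.
  exact (is_series_plus (K:=C_AbsRing) (V:=C_NormedModule) _ _ _ _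
          (is_series_scal (K:=C_AbsRing) (V:=C_NormedModule) c u lu Hu)
          (is_series_scal (K:=C_AbsRing) (V:=C_NormedModule) d v lv Hv)).
Qed.

Lemma Cseries_plus (u v : nat -> C) lu lv :
  is_series u lu -> is_series v lv -> is_series (fun n => u n + v n)%C (lu + lv)%C.
Proof.
  intros Hu Hv. exact (is_series_plus (K:=C_AbsRing) (V:=C_NormedModule) _ _ _ _ Hu Hv).
Qed.

Definition shiftC (u : nat -> C) n : C := match n with O => RtoC 0 | S m => u m end.

Lemma Cseries_shift (u : nat -> C) (l : C) : is_series u l -> is_series (shiftC u) l.
Proof.
  intros H. apply (is_series_decr_1 (K:=C_AbsRing) (V:=C_NormedModule)).
  match goal with |- is_series _ ?l' => replace l' with l end. exact H.
  simpl. change (l = l + - RtoC 0)%C. ring.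
Qed.

Lemma Cseries_delta (c : C) : is_series (fun n => match n with O => c | S _ => RtoC 0 end) c.
Proof.
  apply Clim_series. apply Clim_S.
  apply Clim_bound with (v := fun _ => 0). 2: apply is_lim_seq_const.
  intros n.
  match goal with |- context [@sum_n ?G ?f (S n)] =>
    assert (E : forall m, @sum_n G f m = c) end.
  { induction m. rewrite sum_O. reflexivity. rewrite sum_Sn, IHm. change (c + RtoC 0 = c)%C. ring. }
  rewrite E. replace (c - c)%C with (RtoC 0) by ring. rewrite Cmod_R, Rabs_R0. lra.
Qed.

Ltac rtoc := repeat first [rewrite RtoC_minus | rewrite RtoC_plus | rewrite RtoC_mult | rewrite RtoC_pow | rewrite RtoC_opp].

Definition Afun (al be q : R) (z s : C) : C :=
  (RtoC (al / q) * (1 + RtoC (q ^ 2) * (s * s)) - RtoC be * (s * xz z))%C.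

Lemma FE al be q z s Fs Fqs :
  0 < q < 1 -> (forall k, 1 - al * q ^ k <> 0) -> (forall k, 1 - be * q ^ k <> 0) -> z <> RtoC 0 ->
  is_series (aa al be q z s) Fs -> is_series (aa al be q z (RtoC q * s)%C) Fqs ->
  (Fs * ((1 - z * s) * (1 - / z * s)) = RtoC (1 - al / q) + Afun al be q z s * Fqs)%C.
Proof.
  intros Hq Ha Hb Hz HF HFq.
  set (x := xz z).
  set (A := aa al be q z s). set (B := aa al be q z (RtoC q * s)%C).
  set (a := RtoC (al / q)).
  pose proof (Cseries_lin A B Fs Fqs (RtoC 1) (- a)%C HF HFq) as T1.
  pose proof (Cseries_lin A B Fs Fqs (- (x * s))%C (RtoC be * x * s)%C HF HFq) as T2.
  pose proof (Cseries_lin A B Fs Fqs (s * s)%C (- (a * RtoC (q ^ 2) * s * s))%C HF HFq) as T3.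
  apply Cseries_shift in T2. apply Cseries_shift, Cseries_shift in T3.
  pose proof (Cseries_plus _ _ _ _ T1 (Cseries_plus _ _ _ _ T2 T3)) as W.
  assert (Wd := Cseries_delta (RtoC (1 - al / q))).
  assert (Hq0 : RtoC q <> RtoC 0) by (intros E; apply RtoC_inj in E; lra).
  assert (Hqr : q <> 0) by lra.
  assert (HaC : forall k, (1 - RtoC al * RtoC q ^ k)%C <> RtoC 0).
  { intros k E. apply (Ha k). apply RtoC_inj. rewrite RtoC_minus, RtoC_mult, RtoC_pow. exact E. }
  assert (Hpt : forall n,
     ((fun n0 : nat => 1 * A n0 + - a * B n0) n +
      (fun n0 : nat =>
       shiftC (fun n1 : nat => - (x * s) * A n1 + RtoC be * x * s * B n1) n0 +
       shiftC (shiftC (fun n1 : nat => s * s * A n1 + - (a * RtoC (q ^ 2) * s * s) * B n1)) n0) n)%C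
     = match n with O => RtoC (1 - al / q) | S _ => RtoC 0 end).
  { intros n. unfold A, B, aa, a, x.
    destruct n as [|[|m]]; simpl shiftC; rewrite ?Cpow_scal.
    - rewrite rr_0. simpl Cpow. rtoc. repeat rewrite RtoC_div by exact Hqr. rtoc. field. exact Hq0.
    - rewrite rr_0, rr_1 by (pose proof (Ha 0%nat); simpl in H; lra).
      pose proof (HaC 0%nat) as H0. simpl Cpow in H0.
      rewrite !Cpow_S. simpl Cpow. simpl pow.
      rtoc. repeat rewrite RtoC_div by (first [exact Hqr | pose proof (Ha 0%nat); simpl in H; lra]).
      rtoc. unfold xz. field.
      split; [|split]; auto. intros E. apply H0. rewrite <- E. ring.
    - rewrite rr_rec by assumption. rewrite !Cpow_S.
      pose proof (HaC (S m)) as H0.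
      rtoc. repeat rewrite RtoC_div by (first [exact Hqr | apply Ha]).
      rtoc. unfold xz. rewrite !Cpow_S. field.
      split; auto. }
  apply (is_series_ext (K:=C_AbsRing) (V:=C_NormedModule) _ _ _ Hpt) in W.
  pose proof (filterlim_locally_unique (K:=C_AbsRing) (V:=C_NormedModule) _ _ _ W Wd) as E.
  rewrite <- E. unfold Afun, a, x, xz. field. exact Hz.
Qed.

Definition Dfun (z s : C) : C := ((1 - z * s) * (1 - / z * s))%C.

Lemma qpochC_S a q n : qpochC a q (S n) = (qpochC a q n * (1 - a * RtoC (q ^ n)))%C.
Proof. reflexivity. Qed.

Lemma tau_poch_S al be q z t j :
  tau_poch al be q z t (S j) = (tau_poch al be q z t j * Afun al be q z (RtoC (q ^ j) * t))%C.
Proof.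
  change (tau_poch al be q z t (S j)) with (tau_poch al be q z t j *
             (RtoC (al / q) * (1 + RtoC (q ^ (2 * j + 2)) * (t * t))
              - RtoC (q ^ j * be) * (t * (z + / z))))%C.
  f_equal. unfold Afun, xz.
  replace (q ^ (2 * j + 2)) with (q ^ 2 * (q ^ j * q ^ j)).
  rewrite !RtoC_mult. ring.
  replace (2 * j + 2)%nat with (2 + (j + j))%nat by lia. rewrite !pow_add. ring.
Qed.

Lemma ZW_S z t q j :
  (qpochC (z * t) q (S j) * qpochC (/ z * t) q (S j) =
   qpochC (z * t) q j * qpochC (/ z * t) q j * Dfun z (RtoC (q ^ j) * t))%C.
Proof. rewrite !qpochC_S. unfold Dfun. ring. Qed.

Lemma Cmult_nz_l a b : (a * b)%C <> RtoC 0 -> a <> RtoC 0.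
Proof. intros H E. apply H. rewrite E. ring. Qed.
Lemma Cmult_nz_r a b : (a * b)%C <> RtoC 0 -> b <> RtoC 0.
Proof. intros H E. apply H. rewrite E. ring. Qed.

Lemma Cmult_eq_reg_r c a b : (a * c)%C = (b * c)%C -> c <> RtoC 0 -> a = b.
Proof.
  intros H Hc. replace a with (a * c / c)%C by (field; exact Hc). rewrite H. field. exact Hc.
Qed.

Lemma IT al be q z t (F : nat -> C) c0 :
  z <> RtoC 0 ->
  (forall k, qpochC (z * t) q k <> RtoC 0) -> (forall k, qpochC (/ z * t) q k <> RtoC 0) ->
  (forall j, (F j * Dfun z (RtoC (q ^ j) * t) = c0 + Afun al be q z (RtoC (q ^ j) * t) * F (S j))%C) ->
  forall n, F 0%nat = (c0 / Dfun z t * sum_n (phi32_term al be q z t) n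
     + tau_poch al be q z t (S n) / (qpochC (z * t) q (S n) * qpochC (/ z * t) q (S n)) * F (S n))%C.
Proof.
  intros Hz HZ HW HFE.
  assert (HD : forall j, Dfun z (RtoC (q ^ j) * t) <> RtoC 0).
  { intros j E. assert (X := ZW_S z t q j). rewrite E in X.
    apply (Cmult_neq_0 _ _ (HZ (S j)) (HW (S j))). rewrite X. ring. }
  assert (HD0 : Dfun z t <> RtoC 0).
  { specialize (HD 0%nat). simpl pow in HD. rewrite Cmult_1_l in HD. exact HD. }
  assert (PR : forall k, (phi32_term al be q z t k / Dfun z t =
      tau_poch al be q z t k / (qpochC (z * t) q (S k) * qpochC (/ z * t) q (S k)))%C).
  { intros k. unfold phi32_term. rewrite !qpochC_shift.
    pose proof (HZ (S k)) as h1. pose proof (HW (S k)) as h2. rewrite qpochC_shift in h1, h2.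
    pose proof (Cmult_nz_l _ _ h1). pose proof (Cmult_nz_r _ _ h1).
    pose proof (Cmult_nz_l _ _ h2). pose proof (Cmult_nz_r _ _ h2).
    unfold Dfun. field. repeat split; auto.
    intros E. apply H1. replace (1 - / z * t)%C with ((z - t) / z)%C by (field; exact Hz).
    rewrite E. field. exact Hz. }
  induction n.
  - rewrite sum_O. change (tau_poch al be q z t 1) with (tau_poch al be q z t 1).
    rewrite tau_poch_S. 
    assert (E1 : (qpochC (z * t) q 1 * qpochC (/ z * t) q 1)%C = Dfun z t).
    { rewrite ZW_S. change (qpochC _ q 0) with (RtoC 1). replace (RtoC (q ^ 0)) with (RtoC 1) by (simpl; auto). unfold Dfun. ring. }
    rewrite E1.
    assert (E0 := HFE 0%nat). simpl pow in E0. rewrite Cmult_1_l in E0.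
    rewrite pow_O. rewrite !Cmult_1_l.
    unfold phi32_term. change (tau_poch al be q z t 0) with (RtoC 1).
    change (qpochC _ q 0) with (RtoC 1).
    apply (Cmult_eq_reg_r (Dfun z t)). 2: exact HD0.
    rewrite E0. field. exact HD0.
  - rewrite IHn. rewrite sum_Sn. change (plus ?a ?b) with (Cplus a b).
    rewrite (tau_poch_S _ _ _ _ _ (S n)).
    rewrite (ZW_S z t q (S n)).
    pose proof (HFE (S n)) as E.
    pose proof (PR (S n)) as P.
    pose proof (HD (S n)). pose proof (HZ (S n)). pose proof (HW (S n)).
    assert (Hp : (phi32_term al be q z t (S n) = Dfun z t * (tau_poch al be q z t (S n) /
        (qpochC (z * t) q (S n) * qpochC (/ z * t) q (S n) * Dfun z (RtoC (q ^ S n) * t))))%C).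
    { rewrite <- ZW_S. rewrite <- P. field. exact HD0. }
    rewrite Hp.
    replace (F (S n)) with ((c0 + Afun al be q z (RtoC (q ^ S n) * t) * F (S (S n))) / Dfun z (RtoC (q ^ S n) * t))%C.
    field. repeat split; auto.
    rewrite <- E. field. auto.
Qed.

Lemma exp_le_mono x y : x <= y -> exp x <= exp y.
Proof. intros H. destruct (Req_dec x y) as [->|Hn]. lra. apply Rlt_le, exp_increasing. lra. Qed.

Lemma Cmod_1_minus_le (w : C) : Cmod (1 - w)%C <= 1 + Cmod w.
Proof. eapply Rle_trans. apply Cmod_triangle. rewrite Cmod_opp, Cmod_1. lra. Qed.

Lemma Cmod_1_minus_ge (w : C) : 1 - Cmod w <= Cmod (1 - w)%C.
Proof. pose proof (Cmod_rev_tri 1 w) as H. rewrite Cmod_1 in H. apply Rabs_le_between in H. lra. Qed.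

Lemma qpoch_upper a q n : 0 < q < 1 ->
  Cmod (qpochC a q n) <= exp (Cmod a * (1 - q ^ n) / (1 - q)).
Proof.
  intros Hq. induction n.
  - change (qpochC a q 0) with (RtoC 1). rewrite Cmod_R, Rabs_R1. simpl.
    replace (Cmod a * (1 - 1) / (1 - q)) with 0 by (field; lra). rewrite exp_0. lra.
  - rewrite qpochC_S, Cmod_mult.
    pose proof (pow_q_bounds q n Hq).
    assert (H1 : Cmod (1 - a * RtoC (q ^ n))%C <= exp (Cmod a * q ^ n)).
    { eapply Rle_trans. apply Cmod_1_minus_le. rewrite Cmod_mult, Cmod_R, Rabs_pos_eq by lra.
      apply exp_ineq1_le. }
    replace (Cmod a * (1 - q ^ S n) / (1 - q)) with (Cmod a * (1 - q ^ n) / (1 - q) + Cmod a * q ^ n)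
      by (simpl; field; lra).
    rewrite exp_plus. apply Rmult_le_compat; try apply Cmod_ge_0; auto.
Qed.

Lemma qpoch_bounded a q : 0 < q < 1 -> forall n, Cmod (qpochC a q n) <= exp (Cmod a / (1 - q)).
Proof.
  intros Hq n. eapply Rle_trans. apply qpoch_upper; auto. apply exp_le_mono.
  pose proof (pow_q_bounds q n Hq). pose proof (Cmod_ge_0 a).
  unfold Rdiv. apply Rmult_le_compat_r. apply Rlt_le, Rinv_0_lt_compat; lra.
  rewrite <- (Rmult_1_r (Cmod a)) at 2. apply Rmult_le_compat_l; lra.
Qed.

Lemma sum_n_telescope (Q : nat -> C) n :
  sum_n (fun k => (Q (S k) - Q k)%C) n = (Q (S n) - Q 0%nat)%C.
Proof.
  induction n. rewrite sum_O. reflexivity.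
  rewrite sum_Sn, IHn. change ((Q (S n) - Q 0%nat) + (Q (S (S n)) - Q (S n)) = Q (S (S n)) - Q 0%nat)%C. ring.
Qed.

Lemma qpoch_conv a q : 0 < q < 1 -> exists L, Clim (qpochC a q) L.
Proof.
  intros Hq.
  set (Q := qpochC a q). set (M := exp (Cmod a / (1 - q))).
  set (d := fun k => (Q (S k) - Q k)%C).
  set (b := fun k => M * Cmod a * q ^ k).
  assert (Hdb : forall k, Cmod (d k) <= b k).
  { intros k. unfold d, Q. rewrite qpochC_S.
    replace (qpochC a q k * (1 - a * RtoC (q ^ k)) - qpochC a q k)%C with (- (qpochC a q k * a * RtoC (q ^ k)))%C by ring.
    rewrite Cmod_opp, !Cmod_mult, Cmod_R. pose proof (pow_q_bounds q k Hq). rewrite Rabs_pos_eq by lra.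
    unfold b. apply Rmult_le_compat_r. lra. apply Rmult_le_compat_r. apply Cmod_ge_0. apply qpoch_bounded; auto. }
  assert (Hex : ex_series d).
  { apply (ex_series_le (K:=C_AbsRing) (V:=C_CompleteNormedModule) d b).
    intros n. change (Cmod (d n) <= b n). apply Hdb.
    exists (M * Cmod a * / (1 - q)).
    apply (is_series_scal_l (K:=R_AbsRing) (V:=R_NormedModule) (M * Cmod a)).
    apply is_series_geom. rewrite Rabs_pos_eq; lra. }
  destruct Hex as [l Hl].
  exists (1 + l)%C. apply Clim_S. apply Clim_series in Hl. unfold Clim in *.
  eapply is_lim_seq_ext. 2: exact Hl. intros n. simpl. unfold d. rewrite sum_n_telescope.
  f_equal. unfold Q. change (qpochC a q 0) with (RtoC 1). ring.
Qed.

Lemma qpoch_lower b q n : 0 < q < 1 -> Cmod b <= (1 - q) / 2 ->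
  1 - Cmod b * (1 - q ^ n) / (1 - q) <= Cmod (qpochC b q n).
Proof.
  intros Hq Hb. pose proof (Cmod_ge_0 b). induction n.
  - change (qpochC b q 0) with (RtoC 1). rewrite Cmod_R, Rabs_R1. simpl.
    replace (Cmod b * (1 - 1) / (1 - q)) with 0 by (field; lra). lra.
  - rewrite qpochC_S, Cmod_mult.
    pose proof (pow_q_bounds q n Hq).
    set (L := 1 - Cmod b * (1 - q ^ n) / (1 - q)) in *.
    assert (HL1 : L <= 1).
    { unfold L. assert (0 <= Cmod b * (1 - q ^ n) / (1 - q)).
      { apply Rdiv_le_0_compat. apply Rmult_le_pos; lra. lra. } lra. }
    assert (Hc : Cmod b * q ^ n <= 1 / 2).
    { assert (Cmod b * q ^ n <= Cmod b * 1) by (apply Rmult_le_compat_l; lra).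
      assert ((1 - q) / 2 <= 1 / 2) by lra. lra. }
    assert (H1 : 1 - Cmod b * q ^ n <= Cmod (1 - b * RtoC (q ^ n))%C).
    { eapply Rle_trans. 2: apply Cmod_1_minus_ge. rewrite Cmod_mult, Cmod_R, Rabs_pos_eq by lra. lra. }
    replace (1 - Cmod b * (1 - q ^ S n) / (1 - q)) with (L - Cmod b * q ^ n)
      by (unfold L; simpl; field; lra).
    destruct (Rle_dec 0 L) as [HL0|HL0].
    + assert (L * (1 - Cmod b * q ^ n) <= Cmod (qpochC b q n) * Cmod (1 - b * RtoC (q ^ n))%C).
      { apply Rmult_le_compat; lra. }
      assert (L - Cmod b * q ^ n <= L * (1 - Cmod b * q ^ n)).
      { assert (0 <= Cmod b * q ^ n) by (apply Rmult_le_pos; lra). nra. }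
      lra.
    + assert (0 <= Cmod (qpochC b q n) * Cmod (1 - b * RtoC (q ^ n))%C)
        by (apply Rmult_le_pos; apply Cmod_ge_0).
      assert (0 <= Cmod b * q ^ n) by (apply Rmult_le_pos; lra). lra.
Qed.

Lemma qpochC_nz a q n : 0 < q < 1 -> Cmod a < 1 -> qpochC a q n <> RtoC 0.
Proof.
  intros Hq Ha. induction n.
  - change (qpochC a q 0) with (RtoC 1). intros E. apply RtoC_inj in E. lra.
  - rewrite qpochC_S. apply Cmult_neq_0. exact IHn.
    intros E. pose proof (Cmod_1_minus_ge (a * RtoC (q ^ n))%C) as X.
    rewrite E, Cmod_R, Rabs_R0, Cmod_mult, Cmod_R in X.
    pose proof (pow_q_bounds q n Hq). rewrite Rabs_pos_eq in X by lra.
    assert (Cmod a * q ^ n <= Cmod a * 1) by (apply Rmult_le_compat_l; [apply Cmod_ge_0|lra]). lra.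
Qed.

Lemma qpoch_lim_nz a q L : 0 < q < 1 -> Cmod a < 1 -> Clim (qpochC a q) L -> L <> RtoC 0.
Proof.
  intros Hq Ha HL.
  assert (Hy : 0 < (1 - q) / 2 / (Cmod a + 1)).
  { apply Rdiv_lt_0_compat. lra. pose proof (Cmod_ge_0 a). lra. }
  assert (Hq1 : Rabs q < 1) by (rewrite Rabs_pos_eq; lra).
  destruct (pow_lt_1_zero q Hq1 _ Hy) as [m Hm]. specialize (Hm m (le_n m)).
  pose proof (pow_q_bounds q m Hq). rewrite Rabs_pos_eq in Hm by lra.
  set (b := (a * RtoC (q ^ m))%C).
  assert (Hb : Cmod b <= (1 - q) / 2).
  { unfold b. rewrite Cmod_mult, Cmod_R, Rabs_pos_eq by lra. pose proof (Cmod_ge_0 a).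
    assert (Cmod a * q ^ m <= (Cmod a + 1) * ((1 - q) / 2 / (Cmod a + 1))).
    { apply Rmult_le_compat; lra. }
    replace ((Cmod a + 1) * ((1 - q) / 2 / (Cmod a + 1))) with ((1 - q) / 2) in H1 by (field; lra). lra. }
  assert (Hlow : forall n, Cmod (qpochC a q m) / 2 <= Cmod (qpochC a q (n + m))).
  { intros n. rewrite Nat.add_comm, qpochC_add, Cmod_mult. fold b.
    pose proof (qpoch_lower b q n Hq Hb). pose proof (pow_q_bounds q n Hq).
    assert (1 / 2 <= Cmod (qpochC b q n)).
    { assert (Cmod b * (1 - q ^ n) / (1 - q) <= 1 / 2).
      { apply (Rmult_le_reg_r (1 - q)). lra. unfold Rdiv. rewrite Rmult_assoc, Rinv_l by lra.
        pose proof (Cmod_ge_0 b).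
        assert (Cmod b * (1 - q ^ n) <= Cmod b * 1) by (apply Rmult_le_compat_l; lra). lra. }
      lra. }
    pose proof (Cmod_ge_0 (qpochC a q m)).
    replace (Cmod (qpochC a q m) / 2) with (Cmod (qpochC a q m) * (1 / 2)) by field.
    apply Rmult_le_compat_l; lra. }
  apply Clim_Cmod in HL. apply (is_lim_seq_incr_n _ m) in HL.
  pose proof (is_lim_seq_le _ _ _ _ Hlow (is_lim_seq_const _) HL) as X. simpl in X.
  assert (0 < Cmod (qpochC a q m)) by (apply Cmod_gt_0, qpochC_nz; auto).
  intros E. rewrite E, Cmod_R, Rabs_R0 in X. lra.
Qed.

Definition Fv al be q z (s : C) : C :=
  epsilon (inhabits (RtoC 0)) (fun l => is_series (aa al be q z s) l).

Lemma be_nz be q : 0 < q < 1 -> be < 1 -> forall k, 1 - be * q ^ k <> 0.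
Proof.
  intros Hq Hb k. pose proof (pow_q_bounds q k Hq).
  destruct (Rle_dec be 0).
  - assert (be * q ^ k <= 0) by (apply Rmult_le_0_r; lra). lra.
  - assert (be * q ^ k <= be * 1) by (apply Rmult_le_compat_l; lra). lra.
Qed.

Lemma al_nz al q : 0 < q < 1 -> Rabs al < 1 -> forall k, 1 - al * q ^ k <> 0.
Proof. intros Hq Ha k. pose proof (one_minus_bound al q k Hq Ha). pose proof (Rabs_pos al). lra. Qed.

Lemma Fv_props al be q z t :
  0 < q < 1 -> Rabs al < 1 -> be < 1 -> z <> RtoC 0 -> Cmod t < Cmod z -> Cmod z < 1 ->
  exists B, 0 <= B /\ forall s, Cmod s <= Cmod t ->
    is_series (aa al be q z s) (Fv al be q z s) /\ Cmod (Fv al be q z s - 1)%C <= Cmod s * B.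
Proof.
  intros Hq Hal Hbe Hz Htz Hz1.
  destruct (growth al be q z t Hq Hal (be_nz be q Hq Hbe) Hz Htz Hz1) as [Cst [rho [Hr [Hrt [HC Hg]]]]].
  exists (Cst * rho / (1 - rho * Cmod t)). split.
  { apply Rdiv_le_0_compat. apply Rmult_le_pos; lra. lra. }
  intros s Hs.
  destruct (Fseries al be q z t Cst rho s Hr Hrt HC Hg Hs) as [Fs [HF HB]].
  assert (HFv : is_series (aa al be q z s) (Fv al be q z s)).
  { unfold Fv. apply epsilon_spec. exists Fs. exact HF. }
  assert (E : Fv al be q z s = Fs).
  { exact (filterlim_locally_unique (K:=C_AbsRing) (V:=C_NormedModule) _ _ _ HFv HF). }
  rewrite E. split; [rewrite <- E; exact HFv | exact HB].
Qed.

Lemma Cmod_sj q (t : C) j : 0 < q < 1 -> Cmod (RtoC (q ^ j) * t)%C = q ^ j * Cmod t.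
Proof. intros Hq. rewrite Cmod_mult, Cmod_R, Rabs_pos_eq. auto. pose proof (pow_q_bounds q j Hq). lra. Qed.

Lemma Cmod_sj_le q (t : C) j : 0 < q < 1 -> Cmod (RtoC (q ^ j) * t)%C <= Cmod t.
Proof.
  intros Hq. rewrite Cmod_sj by auto. pose proof (pow_q_bounds q j Hq). pose proof (Cmod_ge_0 t).
  rewrite <- (Rmult_1_l (Cmod t)) at 2. apply Rmult_le_compat_r; lra.
Qed.

Lemma FE_seq al be q z t B :
  0 < q < 1 -> Rabs al < 1 -> be < 1 -> z <> RtoC 0 ->
  (forall s, Cmod s <= Cmod t -> is_series (aa al be q z s) (Fv al be q z s) /\ Cmod (Fv al be q z s - 1)%C <= Cmod s * B) ->
  forall j, (Fv al be q z (RtoC (q ^ j) * t) * Dfun z (RtoC (q ^ j) * t) =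
     RtoC (1 - al / q) + Afun al be q z (RtoC (q ^ j) * t) * Fv al be q z (RtoC (q ^ (S j)) * t))%C.
Proof.
  intros Hq Hal Hbe Hz HP j.
  assert (Eq : (RtoC (q ^ S j) * t)%C = (RtoC q * (RtoC (q ^ j) * t))%C).
  { simpl pow. rewrite RtoC_mult. ring. }
  rewrite Eq. unfold Dfun.
  apply FE; auto. apply al_nz; auto. apply be_nz; auto.
  apply HP, Cmod_sj_le; auto.
  rewrite <- Eq. apply HP, Cmod_sj_le; auto.
Qed.

Lemma Cmod_minus_le (a b : C) : Cmod (a - b)%C <= Cmod a + Cmod b.
Proof. eapply Rle_trans. apply Cmod_triangle. rewrite Cmod_opp. lra. Qed.

Lemma ratio_bound al be q z t :
  0 < q < 1 -> Rabs al < q -> z <> RtoC 0 ->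
  exists th J, 0 <= th < 1 /\ forall n, (n >= J)%nat ->
    Cmod (Afun al be q z (RtoC (q ^ n) * t)) <= th * Cmod (Dfun z (RtoC (q ^ n) * t)).
Proof.
  intros Hq Hal Hz.
  set (x := xz z).
  set (a0 := Rabs al / q).
  assert (Ha0 : 0 <= a0 < 1).
  { unfold a0. split. apply Rdiv_le_0_compat. apply Rabs_pos. lra.
    apply (Rmult_lt_reg_r q). lra. unfold Rdiv. rewrite Rmult_assoc, Rinv_l by lra. lra. }
  set (tm := Cmod t). set (xm := Cmod x).
  assert (Htm : 0 <= tm) by apply Cmod_ge_0. assert (Hxm : 0 <= xm) by apply Cmod_ge_0.
  set (c1 := a0 * q ^ 2 * tm ^ 2 + Rabs be * xm * tm).
  set (c2 := tm * xm + tm ^ 2).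
  assert (Hc1 : 0 <= c1).
  { unfold c1. pose proof (Rabs_pos be). pose proof (Rabs_pos al). apply Rplus_le_le_0_compat; repeat apply Rmult_le_pos; try apply pow_le; try lra. apply Rlt_le, Rinv_0_lt_compat; lra. }
  assert (Hc2 : 0 <= c2).
  { unfold c2. apply Rplus_le_le_0_compat. apply Rmult_le_pos; lra. apply pow_le; lra. }
  set (th := (a0 + 1) / 2).
  set (eta := (th - a0) / (c1 + c2 + 1)).
  assert (Heta : 0 < eta) by (unfold eta, th; apply Rdiv_lt_0_compat; lra).
  assert (Hq1 : Rabs q < 1) by (rewrite Rabs_pos_eq; lra).
  destruct (pow_lt_1_zero q Hq1 eta Heta) as [J HJ].
  exists th, J. split. unfold th; lra.
  intros n Hn. specialize (HJ n Hn). pose proof (pow_q_bounds q n Hq) as Hu.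
  rewrite Rabs_pos_eq in HJ by lra.
  set (u := q ^ n) in *.
  set (s := (RtoC u * t)%C).
  assert (Hs : Cmod s = u * tm) by (unfold s; rewrite Cmod_mult, Cmod_R, Rabs_pos_eq by lra; auto).
  assert (Huu : u * u <= u) by (rewrite <- (Rmult_1_r u) at 3; apply Rmult_le_compat_l; lra).
  assert (HA : Cmod (Afun al be q z s) <= a0 + u * c1).
  { unfold Afun. fold x. eapply Rle_trans. apply Cmod_minus_le.
    rewrite !Cmod_mult, !Cmod_R.
    assert (E1 : Rabs (al / q) = a0) by (unfold a0; rewrite Rabs_div, (Rabs_pos_eq q); lra).
    rewrite E1, Hs. fold xm.
    assert (H1 : Cmod (1 + RtoC (q ^ 2) * (s * s))%C <= 1 + q ^ 2 * (u * tm) ^ 2).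
    { eapply Rle_trans. apply Cmod_triangle. rewrite Cmod_1, !Cmod_mult, Cmod_R, Hs, Rabs_pos_eq.
      simpl; lra. apply pow_le; lra. }
    assert (H2 : a0 * Cmod (1 + RtoC (q ^ 2) * (s * s))%C <= a0 * (1 + q ^ 2 * (u * tm) ^ 2))
      by (apply Rmult_le_compat_l; lra).
    assert (H3 : a0 * q ^ 2 * (u * u) * tm ^ 2 <= a0 * q ^ 2 * u * tm ^ 2).
    { apply Rmult_le_compat_r. apply pow_le; lra. apply Rmult_le_compat_l. apply Rmult_le_pos. lra. apply pow_le; lra. lra. }
    unfold c1. replace (a0 * (1 + q ^ 2 * (u * tm) ^ 2)) with (a0 + a0 * q ^ 2 * (u * u) * tm ^ 2) in H2 by ring.
    nra. }
  assert (HD : 1 - u * c2 <= Cmod (Dfun z s)).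
  { replace (Dfun z s) with (1 - (s * x - s * s))%C by (unfold Dfun, x, xz; field; exact Hz).
    eapply Rle_trans. 2: apply Cmod_1_minus_ge.
    assert (Cmod (s * x - s * s)%C <= u * tm * xm + (u * tm) ^ 2).
    { eapply Rle_trans. apply Cmod_minus_le. rewrite !Cmod_mult, Hs. fold xm. simpl. lra. }
    assert ((u * tm) ^ 2 <= u * tm ^ 2).
    { replace ((u * tm) ^ 2) with ((u * u) * tm ^ 2) by ring. apply Rmult_le_compat_r. apply pow_le; lra. lra. }
    unfold c2. nra. }
  assert (Hmain : a0 + u * c1 <= th * (1 - u * c2)).
  { assert (u * (c1 + c2) <= eta * (c1 + c2)) by (apply Rmult_le_compat_r; lra).
    assert (eta * (c1 + c2) <= th - a0).
    { unfold eta. apply (Rmult_le_reg_r (c1 + c2 + 1)). lra.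
      replace ((th - a0) / (c1 + c2 + 1) * (c1 + c2) * (c1 + c2 + 1)) with ((th - a0) * (c1 + c2)) by (field; lra).
      assert (0 <= th - a0) by (unfold th; lra). nra. }
    assert (u * c2 * th <= u * c2) by (assert (0 <= u * c2) by (apply Rmult_le_pos; lra); unfold th; nra).
    nra. }
  assert (0 <= th) by (unfold th; lra).
  assert (th * (1 - u * c2) <= th * Cmod (Dfun z s)) by (apply Rmult_le_compat_l; lra).
  lra.
Qed.

Lemma Dfun_nz q z t j :
  (forall k, qpochC (z * t) q k <> RtoC 0) -> (forall k, qpochC (/ z * t) q k <> RtoC 0) ->
  Dfun z (RtoC (q ^ j) * t) <> RtoC 0.
Proof.
  intros HZ HW E. assert (X := ZW_S z t q j). rewrite E in X.
  apply (Cmult_neq_0 _ _ (HZ (S j)) (HW (S j))). rewrite X. ring.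
Qed.

Lemma P_lim al be q z t :
  0 < q < 1 -> Rabs al < q -> z <> RtoC 0 ->
  (forall k, qpochC (z * t) q k <> RtoC 0) -> (forall k, qpochC (/ z * t) q k <> RtoC 0) ->
  is_lim_seq (fun n => Cmod (tau_poch al be q z t n / (qpochC (z * t) q n * qpochC (/ z * t) q n))%C) 0.
Proof.
  intros Hq Hal Hz HZ HW.
  set (P := fun n => (tau_poch al be q z t n / (qpochC (z * t) q n * qpochC (/ z * t) q n))%C).
  assert (HPS : forall n, P (S n) = (P n * (Afun al be q z (RtoC (q ^ n) * t) / Dfun z (RtoC (q ^ n) * t)))%C).
  { intros n. unfold P. rewrite tau_poch_S, ZW_S. pose proof (Dfun_nz q z t n HZ HW).
    pose proof (HZ n). pose proof (HW n). field. repeat split; auto. }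
  destruct (ratio_bound al be q z t Hq Hal Hz) as [th [J [Hth HJ]]].
  assert (Hind : forall k, Cmod (P (k + J)%nat) <= Cmod (P J) * th ^ k).
  { induction k.
    - simpl. lra.
    - replace (S k + J)%nat with (S (k + J)) by lia. rewrite HPS, Cmod_mult, Cmod_div by (apply Dfun_nz; auto).
      pose proof (HJ (k + J)%nat ltac:(lia)) as h.
      pose proof (Dfun_nz q z t (k + J) HZ HW) as hd. apply Cmod_gt_0 in hd.
      assert (Cmod (Afun al be q z (RtoC (q ^ (k + J)) * t)) / Cmod (Dfun z (RtoC (q ^ (k + J)) * t)) <= th).
      { apply (Rmult_le_reg_r (Cmod (Dfun z (RtoC (q ^ (k + J)) * t)))). lra.
        unfold Rdiv. rewrite Rmult_assoc, Rinv_l by lra. lra. }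
      simpl pow.
      assert (Cmod (P (k + J)%nat) * (Cmod (Afun al be q z (RtoC (q ^ (k + J)) * t)) / Cmod (Dfun z (RtoC (q ^ (k + J)) * t)))
              <= Cmod (P J) * th ^ k * th).
      { apply Rmult_le_compat; auto. apply Cmod_ge_0. apply Rdiv_le_0_compat. apply Cmod_ge_0. lra. }
      lra. }
  apply (is_lim_seq_incr_n _ J).
  apply is_lim_seq_le_le with (u := fun _ => 0) (w := fun k => Cmod (P J) * th ^ k).
  - intros n. split. apply Cmod_ge_0. apply Hind.
  - apply is_lim_seq_const.
  - replace (Finite 0) with (Rbar_mult (Cmod (P J)) 0) by (simpl; f_equal; ring).
    apply is_lim_seq_scal_l. apply is_lim_seq_geom. rewrite Rabs_pos_eq; lra.
Qed.

Lemma Clim_S' u l : Clim u l -> Clim (fun n => u (S n)) l.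
Proof. intros H. unfold Clim in *. apply (is_lim_seq_incr_1 (fun n => Cmod (u n - l)%C)). exact H. Qed.

Lemma Clim_ext u v l : (forall n, u n = v n) -> Clim u l -> Clim v l.
Proof. intros E H. unfold Clim in *. eapply is_lim_seq_ext. 2: exact H. intros n. simpl. rewrite E. auto. Qed.

Lemma gen_term_aa al be q z t n : gen_term al be q z t n = aa al be q z t n.
Proof. unfold gen_term, aa, rr, cc, xz. ring. Qed.

Lemma tau_eq q be z t tau :
  0 < q < 1 -> tau <> RtoC 0 ->
  (RtoC q * (tau + / tau))%C = (RtoC be * (z + / z))%C ->
  forall n, tau_poch q be q z t n = (qpochC (RtoC q * (tau * t)) q n * qpochC (RtoC q * (/ tau * t)) q n)%C.
Proof.
  intros Hq Htau Hrel n. induction n.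
  - change (RtoC 1 = RtoC 1 * RtoC 1)%C. ring.
  - rewrite tau_poch_S, IHn, !qpochC_S. unfold Afun, xz.
    replace (RtoC be * (RtoC (q ^ n) * t * (z + / z)))%C with (RtoC (q ^ n) * t * (RtoC be * (z + / z)))%C by ring.
    rewrite <- Hrel. replace (q / q) with 1 by (field; lra). rtoc. field. exact Htau.
Qed.

Theorem theorem2p16 (q beta : R) (t z : C) :
  0 < q < 1 -> beta < 1 -> Cmod t < Cmod z -> Cmod z < 1 ->
  (forall alpha : R, Rabs alpha < q ->
     exists S : C,
       is_series (phi32_term alpha beta q z t) S /\
       is_series (gen_term alpha beta q z t)
         (Cmult (Cdiv (RtoC (1 - alpha / q))
                      (Cmult (Cminus (RtoC 1) (Cmult z t))
                             (Cminus (RtoC 1) (Cmult (Cinv z) t)))) S)) /\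
  (forall tau : C, tau <> RtoC 0 ->
     Cmult (RtoC q) (Cplus tau (Cinv tau)) = Cmult (RtoC beta) (Cplus z (Cinv z)) ->
     exists N1 N2 D1 D2 : C,
       qpoch_inf_is (Cmult (RtoC q) (Cmult tau t)) q N1 /\
       qpoch_inf_is (Cmult (RtoC q) (Cmult (Cinv tau) t)) q N2 /\
       qpoch_inf_is (Cmult z t) q D1 /\
       qpoch_inf_is (Cmult (Cinv z) t) q D2 /\
       is_series (gen_term q beta q z t) (Cdiv (Cmult N1 N2) (Cmult D1 D2))).
Proof.
  intros Hq Hbe Htz Hz1.
  assert (Hzm : 0 < Cmod z) by (pose proof (Cmod_ge_0 t); lra).
  assert (Hz : z <> RtoC 0) by (apply Cmod_gt_0; exact Hzm).
  assert (Hzt : Cmod (z * t)%C < 1).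
  { rewrite Cmod_mult. pose proof (Cmod_ge_0 t).
    assert (Cmod z * Cmod t <= 1 * Cmod t) by (apply Rmult_le_compat_r; lra). lra. }
  assert (Hwt : Cmod (/ z * t)%C < 1).
  { rewrite Cmod_mult, Cmod_inv by exact Hz.
    apply (Rmult_lt_reg_l (Cmod z)). lra. rewrite <- Rmult_assoc, Rinv_r by lra. lra. }
  assert (HZ : forall k, qpochC (z * t) q k <> RtoC 0) by (intros; apply qpochC_nz; auto).
  assert (HW : forall k, qpochC (/ z * t) q k <> RtoC 0) by (intros; apply qpochC_nz; auto).
  assert (HD0 : Dfun z t <> RtoC 0).
  { pose proof (Dfun_nz q z t 0 HZ HW) as X. simpl pow in X. rewrite Cmult_1_l in X. exact X. }
  split.
  - intros al Hal.
    assert (Hal1 : Rabs al < 1) by lra.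
    destruct (Fv_props al beta q z t Hq Hal1 Hbe Hz Htz Hz1) as [B [HB HP]].
    set (F := fun j => Fv al beta q z (RtoC (q ^ j) * t)).
    pose proof (IT al beta q z t F (RtoC (1 - al / q)) Hz HZ HW
                  (FE_seq al beta q z t B Hq Hal1 Hbe Hz HP)) as Hit.
    assert (F0 : F 0%nat = Fv al beta q z t).
    { unfold F. simpl pow. rewrite Cmult_1_l. reflexivity. }
    rewrite F0 in Hit.
    set (c := RtoC (1 - al / q)) in *.
    assert (Hc : c <> RtoC 0).
    { unfold c. intros E. apply RtoC_inj in E.
      assert (al / q < 1).
      { apply (Rmult_lt_reg_r q). lra. unfold Rdiv. rewrite Rmult_assoc, Rinv_l by lra.
        pose proof (Rle_abs al). lra. }
      lra. }
    set (F0v := Fv al beta q z t) in *.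
    exists (F0v * Dfun z t / c)%C. split.
    + apply Clim_series.
      set (P := fun n => (tau_poch al beta q z t n / (qpochC (z * t) q n * qpochC (/ z * t) q n))%C) in *.
      apply Clim_bound with (v := fun n => Cmod (P (S n)) * ((1 + Cmod t * B) * Cmod (Dfun z t / c)%C)).
      * intros n. specialize (Hit n).
        match goal with |- Cmod (?u - ?l)%C <= _ =>
          assert (E : (u - l)%C = (- (P (S n) * F (S n)) * (Dfun z t / c))%C) end.
        { rewrite Hit. change (@sum_n (NormedModule.AbelianMonoid C_AbsRing C_NormedModule) (phi32_term al beta q z t) n) with (@sum_n C_AbelianMonoid (phi32_term al beta q z t) n). set (Sn := @sum_n C_AbelianMonoid (phi32_term al beta q z t) n). unfold P. field. split; auto. }
        rewrite E, Cmod_mult, Cmod_opp, Cmod_mult, Rmult_assoc.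
        apply Rmult_le_compat_l. apply Cmod_ge_0.
        apply Rmult_le_compat_r. apply Cmod_ge_0.
        destruct (HP (RtoC (q ^ S n) * t)%C (Cmod_sj_le q t (S n) Hq)) as [_ Hb].
        pose proof (Cmod_sj_le q t (S n) Hq).
        assert (Cmod (RtoC (q ^ S n) * t)%C * B <= Cmod t * B) by (apply Rmult_le_compat_r; lra).
        assert (Cmod (F (S n)) <= Cmod (F (S n) - 1)%C + 1).
        { replace (F (S n)) with ((F (S n) - 1) + 1)%C at 1 by ring.
          eapply Rle_trans. apply Cmod_triangle. rewrite Cmod_1. lra. }
        unfold F in *. lra.
      * replace (Finite 0) with (Rbar_mult 0 ((1 + Cmod t * B) * Cmod (Dfun z t / c)%C)) by (simpl; f_equal; ring).
        apply is_lim_seq_scal_r.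
        apply (is_lim_seq_incr_1 (fun n => Cmod (P n))).
        apply P_lim; auto.
    + apply (is_series_ext (K:=C_AbsRing) (V:=C_NormedModule) (aa al beta q z t)).
      { intros n. symmetry. apply gen_term_aa. }
      match goal with |- is_series _ ?l => replace l with F0v end.
      apply HP. lra.
      unfold Dfun. change (Cmult z t) with (z * t)%C. change (Cmult (Cinv z) t) with (/ z * t)%C.
      unfold Dfun in HD0. pose proof (Cmult_nz_l _ _ HD0) as h1. pose proof (Cmult_nz_r _ _ HD0) as h2.
      field. cbv beta. repeat split; auto.
      intros E. apply h2. replace (1 - / z * t)%C with ((z - t) / z)%C by (field; exact Hz).
      rewrite E. field. exact Hz.
  - intros tau Htau Hrel.
    assert (Hal1 : Rabs q < 1) by (rewrite Rabs_pos_eq; lra).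
    destruct (Fv_props q beta q z t Hq Hal1 Hbe Hz Htz Hz1) as [B [HB HP]].
    set (F := fun j => Fv q beta q z (RtoC (q ^ j) * t)).
    pose proof (IT q beta q z t F (RtoC (1 - q / q)) Hz HZ HW
                  (FE_seq q beta q z t B Hq Hal1 Hbe Hz HP)) as Hit.
    assert (F0 : F 0%nat = Fv q beta q z t).
    { unfold F. simpl pow. rewrite Cmult_1_l. reflexivity. }
    rewrite F0 in Hit.
    replace (1 - q / q) with 0 in Hit by (field; lra).
    set (F0v := Fv q beta q z t) in *.
    destruct (qpoch_conv (RtoC q * (tau * t))%C q Hq) as [N1 HN1].
    destruct (qpoch_conv (RtoC q * (/ tau * t))%C q Hq) as [N2 HN2].
    destruct (qpoch_conv (z * t)%C q Hq) as [D1 HD1].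
    destruct (qpoch_conv (/ z * t)%C q Hq) as [D2 HD2].
    assert (HD1n : D1 <> RtoC 0) by exact (qpoch_lim_nz _ _ _ Hq Hzt HD1).
    assert (HD2n : D2 <> RtoC 0) by exact (qpoch_lim_nz _ _ _ Hq Hwt HD2).
    assert (Heq : forall n, (F0v * (qpochC (z * t) q (S n) * qpochC (/ z * t) q (S n)))%C =
       (qpochC (RtoC q * (tau * t)) q (S n) * qpochC (RtoC q * (/ tau * t)) q (S n) * F (S n))%C).
    { intros n. rewrite (Hit n). rewrite (tau_eq q beta z t tau Hq Htau Hrel (S n)).
      pose proof (HZ (S n)). pose proof (HW (S n)). field. split; auto. }
    assert (L1 : Clim (fun n => F0v * (qpochC (z * t) q (S n) * qpochC (/ z * t) q (S n)))%C (F0v * (D1 * D2))%C).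
    { apply Clim_mult. apply Clim_const. apply Clim_mult; apply Clim_S'; auto. }
    assert (HF1 : Clim (fun n => F (S n)) (RtoC 1)).
    { apply Clim_bound with (v := fun n => q ^ S n * (Cmod t * B)).
      - intros n. destruct (HP (RtoC (q ^ S n) * t)%C (Cmod_sj_le q t (S n) Hq)) as [_ Hb].
        rewrite Cmod_sj in Hb by auto. unfold F. lra.
      - replace (Finite 0) with (Rbar_mult 0 (Cmod t * B)) by (simpl; f_equal; ring).
        apply is_lim_seq_scal_r. apply (is_lim_seq_incr_1 (fun n => q ^ n)).
        apply is_lim_seq_geom. exact Hal1. }
    assert (L2 : Clim (fun n => qpochC (RtoC q * (tau * t)) q (S n) * qpochC (RtoC q * (/ tau * t)) q (S n) * F (S n))%C
                      (N1 * N2 * RtoC 1)%C).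
    { apply Clim_mult. apply Clim_mult; apply Clim_S'; auto. exact HF1. }
    apply (Clim_ext _ _ _ Heq) in L1.
    pose proof (Clim_unique _ _ _ L1 L2) as E.
    exists N1, N2, D1, D2.
    split. apply Clim_filterlim; exact HN1.
    split. apply Clim_filterlim; exact HN2.
    split. apply Clim_filterlim; exact HD1.
    split. apply Clim_filterlim; exact HD2.
    apply (is_series_ext (K:=C_AbsRing) (V:=C_NormedModule) (aa q beta q z t)).
    { intros n. symmetry. apply gen_term_aa. }
    match goal with |- is_series _ ?l => replace l with F0v end.
    apply HP. lra.
    apply (Cmult_eq_reg_r (D1 * D2)%C). 2: apply Cmult_neq_0; auto.
    rewrite E. change (Cdiv (Cmult N1 N2) (Cmult D1 D2)) with ((N1 * N2) / (D1 * D2))%C.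
    field. split; auto.
Qed.
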